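(* Let $P$ be a regular polygon surface all of whose faces have degree in $\{5,7,8,9,10\}$, and let $f$ be a face of $P$ of degree $n\geq 7$. If $f$ has positive facial curvature, then every vertex incident to $f$ has the form $(5^2,n)$, i.e. has degree three and is incident to exactly two faces of degree five and one face (namely $f$) of degree $n$. Moreover, if $f$ is incident to a vertex with negative vertex curvature, then $f$ has negative facial curvature.
   Context: A regular polygon surface (RPS) is a triple $(\Sigma,\Gamma,\psi)$ where $\Gamma$ is a finite graph embedded in a closed surface $\Sigma$ so that every face (component of $\Sigma\setminus\Gamma$) has closure a closed $2$-cell, the closures of two faces meet in the empty set, a vertex, or an edge, and $\psi:\Sigma\to\mathbb{R}^3$ is continuous and maps each face of degree $k$ (number of incident edges) onto a regular Euclidean $k$-gon with unit edge lengths; the images of two adjacent faces meet in exactly one vertex or exactly one edge with its endpoints. The vertex curvature $k_v$ of a vertex $v$ is $2\pi$ minus the sum, over faces containing $v$, of the interior angle at $v$ of the regular polygon that is the image of that face. The facial curvature of a face $f$ is $k_f=\sum_{v\in f} k_v/d_v$, summing over vertices $v$ incident to $f$, where $d_v$ is the degree of $v$. *)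

(* Defs.v *)
From HB Require Import structures.
From mathcomp Require Import all_boot all_order all_algebra.
From mathcomp Require Import reals trigo.
Set Implicit Arguments. Unset Strict Implicit. Unset Printing Implicit Defensive.
Import Order.TTheory GRing.Theory Num.Theory.
Local Open Scope ring_scope.

(* Combinatorial model of the embedded graph Gamma in the closed surface Sigma:
   V = vertices, F = faces, bnd f = the boundary cycle of (the closure of) face f,
   listed as a cyclic sequence of vertices. *)

Section RPS.
Variables (V F : finType) (bnd : F -> seq V).

Definition fedge (f : F) (x y : V) : bool :=
  [&& x \in bnd f, y \in bnd f & (next (bnd f) x == y) || (next (bnd f) y == x)].

Definition is_edge (x y : V) : bool := [exists g, fedge g x y].

Definition fdeg (f : F) : nat := size (bnd f).

Definition vdeg (v : V) : nat := #|[set w | is_edge v w]|.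

Definition link_adj (v : V) (f g : F) : bool :=
  [&& f != g, v \in bnd f, v \in bnd g & [exists w, fedge f v w && fedge g v w]].

Definition face_touch (f g : F) : bool := [exists v, (v \in bnd f) && (v \in bnd g)].

(* Combinatorial conditions: Gamma cellularly embedded in a closed (connected)
   surface, every face a closed 2-cell (simple boundary cycle), closures of two
   distinct faces meet in empty set, a vertex, or an edge. *)
Definition comb_surface : Prop :=
  [/\ (forall f, uniq (bnd f) /\ (3 <= size (bnd f))%N),
      (forall v, exists f, v \in bnd f),
      (forall x y, is_edge x y -> #|[set g | fedge g x y]| = 2),
      (forall v f g, v \in bnd f -> v \in bnd g -> connect (link_adj v) f g) &
      ((forall f g, connect face_touch f g) /\
      (forall f g, f != g ->
         let S := [set v | (v \in bnd f) && (v \in bnd g)] in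
         (#|S| <= 2)%N /\
         (forall x y, x \in S -> y \in S -> x != y -> fedge f x y && fedge g x y)))].

End RPS.

Section Geometry.
Variable R : realType.
Local Notation pt := 'rV[R]_3.

Definition dot (u w : pt) : R := \sum_(i < 3) u 0 i * w 0 i.

(* p_0, ..., p_(k-1) (in this cyclic order) are the vertices of a regular
   Euclidean k-gon with unit edge lengths *)
Definition regular_unit_polygon (s : seq pt) : Prop :=
  let k := size s in
  exists (c e1 e2 : pt) (t0 : R),
    [/\ dot e1 e1 = 1, dot e2 e2 = 1, dot e1 e2 = 0 &
      forall j : nat, (j < k)%N ->
        nth 0 s j = c + (2 * sin (pi / k%:R))^-1 *:
          (cos (t0 + 2 * pi * j%:R / k%:R) *: e1 +
           sin (t0 + 2 * pi * j%:R / k%:R) *: e2)].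

Definition in_conv (s : seq pt) (x : pt) : Prop :=
  exists l : nat -> R,
    [/\ forall i, 0 <= l i,
        \sum_(i < size s) l i = 1 &
        x = \sum_(i < size s) l i *: nth 0 s i].

Variables (V F : finType) (bnd : F -> seq V).

(* psi restricted to the vertices; the image of a face is the (closed) regular
   polygon spanned by the images of its boundary vertices *)
Definition is_RPS (psi : V -> pt) : Prop :=
  [/\ comb_surface bnd,
      (forall f, regular_unit_polygon (map psi (bnd f))) &
      (forall f g, f != g -> face_touch bnd f g ->
         forall x, (in_conv (map psi (bnd f)) x /\ in_conv (map psi (bnd g)) x)
                   <-> in_conv (map psi [seq v <- bnd f | v \in bnd g]) x)].

Definition int_angle (k : nat) : R := (k%:R - 2) * pi / k%:R.

Definition vertex_curv (v : V) : R :=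
  2 * pi - \sum_(g : F | v \in bnd g) int_angle (fdeg bnd g).

Definition face_curv (f : F) : R :=
  \sum_(v : V | v \in bnd f) vertex_curv v / (vdeg bnd v)%:R.

End Geometry.

Definition form_55n (V F : finType) (bnd : F -> seq V) (v : V) (n : nat) : Prop :=
  [/\ vdeg bnd v = 3%N,
      #|[set g | (v \in bnd g) && (fdeg bnd g == 5%N)]| = 2%N &
      #|[set g | (v \in bnd g) && (fdeg bnd g == n)]| = 1%N].

(* Main.v *)
Require Import Defs.
From HB Require Import structures.
From mathcomp Require Import all_boot all_order all_algebra.
From mathcomp Require Import reals trigo.
From mathcomp Require Import zify ring lra.
Set Implicit Arguments. Unset Strict Implicit. Unset Printing Implicit Defensive.
Import Order.TTheory GRing.Theory Num.Theory.

Section Seqs.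
Variable T : eqType.
Implicit Types (p : seq T) (x : T).

Definition sidx k i := if i.+1 == k then 0%N else i.+1.
Definition pidx k i := if i == 0%N then k.-1 else i.-1.

Lemma next_sidx p x : x \in p -> next p x = nth x p (sidx (size p) (index x p)).
Proof.
move=> xp; rewrite next_nth xp.
case: p xp => [//|y p'] xp.
have := xp; rewrite -index_mem => ilt.
rewrite /sidx.
case: eqP => [E|NE].
  have E' : index x (y :: p') = size p' by move: E => /= [].
  by rewrite E' /= nth_default.
have ilt' : (index x (y :: p') < size p')%N.
  by move: ilt NE => /=; lia.
by rewrite [in RHS]/= (set_nth_default y).
Qed.

Lemma prev_pidx p x : uniq p -> x \in p ->
  prev p x = nth x p (pidx (size p) (index x p)).
Proof.
move=> up xp; rewrite prev_nth xp.
case: p up xp => [//|y p'] /= /andP[ynp' up'] xp.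
rewrite /pidx /=; case: (eqVneq y x) => [y_x|NE].
  subst y; rewrite /=.
  have -> : index x p' = size p'.
    by apply/eqP; rewrite eqn_leq index_size leqNgt index_mem ynp'.
  by [].
by rewrite (_ : ((index x p').+1 == 0) = false) //; apply: set_nth_default; rewrite /= ltnS index_size.
Qed.

Lemma sidx_lt k i : (i < k)%N -> (sidx k i < k)%N.
Proof. rewrite /sidx; case: eqP; lia. Qed.
Lemma pidx_lt k i : (i < k)%N -> (pidx k i < k)%N.
Proof. rewrite /pidx; case: eqP; lia. Qed.

Lemma next_neq p x : uniq p -> x \in p -> (3 <= size p)%N ->
  [/\ next p x != x, prev p x != x & next p x != prev p x].
Proof.
move=> up xp s3.
rewrite (next_sidx xp) (prev_pidx up xp).
have ilt : (index x p < size p)%N by rewrite index_mem.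
have Hx := nth_index x xp.
have key : forall j j', (j < size p)%N -> (j' < size p)%N -> j != j' -> nth x p j != nth x p j'.
  by move=> j j' jl j'l; rewrite nth_uniq.
move: (index x p) ilt Hx => i ilt Hx.
have ne : forall a b : nat, (a < size p)%N -> (b < size p)%N -> (a != b) -> nth x p a != nth x p b.
  by move=> a b; apply: key.
have S1 : sidx (size p) i != i.
  by rewrite /sidx; have [E1|E1] := eqVneq i.+1 (size p); apply/negP => /eqP; lia.
have S2 : pidx (size p) i != i.
  by rewrite /pidx; have [E1|E1] := eqVneq i 0%N; apply/negP => /eqP; lia.
have S3 : sidx (size p) i != pidx (size p) i.
  by rewrite /sidx /pidx; have [E1|E1] := eqVneq i.+1 (size p); have [E2|E2] := eqVneq i 0%N;
  apply/negP => /eqP; lia.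
have A1 := ne _ _ (sidx_lt ilt) ilt S1.
have A2 := ne _ _ (pidx_lt ilt) ilt S2.
have A3 := ne _ _ (sidx_lt ilt) (pidx_lt ilt) S3.
by rewrite Hx in A1 A2.
Qed.

Lemma uniq_card_le (U : finType) (s : seq U) (N : {set U}) :
  uniq s -> all (fun z => z \in N) s -> (size s <= #|N|)%N.
Proof.
move=> us /allP sN; rewrite -(card_uniqP us); apply: subset_leq_card.
by apply/subsetP => z /sN.
Qed.

End Seqs.

Section Comb.
Variables (V F : finType) (bnd : F -> seq V).
Hypothesis Hc : comb_surface bnd.

Lemma uniq_bnd f : uniq (bnd f).
Proof. by case: Hc => H _ _ _ _; case: (H f). Qed.
Lemma size_bnd f : (3 <= size (bnd f))%N.
Proof. by case: Hc => H _ _ _ _; case: (H f). Qed.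
Lemma edge2 x y : is_edge bnd x y -> #|[set g | fedge bnd g x y]| = 2.
Proof. by case: Hc => _ _ H _ _; apply: H. Qed.
Lemma share2 f g : f != g -> (#|[set v | (v \in bnd f) && (v \in bnd g)]| <= 2)%N.
Proof. by case: Hc => _ _ _ _ [_ H] fg; case: (H f g fg). Qed.

Lemma share3 f g x y z : f != g -> x \in bnd f -> y \in bnd f -> z \in bnd f ->
  x \in bnd g -> y \in bnd g -> z \in bnd g -> uniq [:: x; y; z] -> False.
Proof.
move=> fg xf yf zf xg yg zg u.
have := share2 fg.
have := uniq_card_le (N := [set v | (v \in bnd f) && (v \in bnd g)]) u.
rewrite /= !inE xf yf zf xg yg zg /= => /(_ isT) /leq_trans H /H.
by [].
Qed.

Lemma fedge_sym g x y : fedge bnd g x y = fedge bnd g y x.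
Proof. by rewrite /fedge; apply/and3P/and3P => -[a b c]; split; rewrite // orbC. Qed.

Lemma fedge_in g x y : fedge bnd g x y -> (x \in bnd g) /\ (y \in bnd g).
Proof. by case/and3P. Qed.

Lemma fedge_edge g x y : fedge bnd g x y -> is_edge bnd x y.
Proof. by move=> H; apply/existsP; exists g. Qed.

Lemma fedgeE g v w : v \in bnd g ->
  fedge bnd g v w = (w == next (bnd g) v) || (w == prev (bnd g) v).
Proof.
move=> vg; rewrite /fedge vg /=; apply/idP/idP.
  case/andP => wg /orP[/eqP <-|/eqP E]; first by rewrite eqxx.
  by rewrite -E prev_next ?uniq_bnd // eqxx orbT.
case/orP => /eqP ->; first by rewrite mem_next vg eqxx.
by rewrite mem_prev vg next_prev ?uniq_bnd // eqxx orbT.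
Qed.

Lemma fedge_neq g x y : fedge bnd g x y -> x != y.
Proof.
move=> H; have [xg _] := fedge_in H; move: H; rewrite fedgeE //.
have [A B _] := next_neq (uniq_bnd g) xg (size_bnd g).
by case/orP => /eqP ->; rewrite eq_sym.
Qed.

Lemma fedge_next g v : v \in bnd g -> fedge bnd g v (next (bnd g) v).
Proof. by move=> vg; rewrite fedgeE // eqxx. Qed.
Lemma fedge_prev g v : v \in bnd g -> fedge bnd g v (prev (bnd g) v).
Proof. by move=> vg; rewrite fedgeE // eqxx orbT. Qed.

Lemma nbr2 g v x y z : fedge bnd g v x -> fedge bnd g v y -> x != y ->
  fedge bnd g v z -> (z == x) || (z == y).
Proof.
move=> hx hy xy hz; have [vg _] := fedge_in hx.
move: hx hy hz xy; rewrite !fedgeE //.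
by case/orP => /eqP ->; case/orP => /eqP ->; case/orP => /eqP ->;
  rewrite ?eqxx ?orbT.
Qed.

Lemma other_nbr g v x : fedge bnd g v x -> exists y, fedge bnd g v y /\ y != x.
Proof.
move=> hx; have [vg _] := fedge_in hx.
have [_ _ np] := next_neq (uniq_bnd g) vg (size_bnd g).
have [E|NE] := eqVneq x (next (bnd g) v).
  by exists (prev (bnd g) v); rewrite fedge_prev // E eq_sym.
by exists (next (bnd g) v); rewrite fedge_next // eq_sym.
Qed.

Lemma other_face f x y : fedge bnd f x y -> exists g, g != f /\ fedge bnd g x y.
Proof.
move=> H; have E := edge2 (fedge_edge H).
have fin : f \in [set g | fedge bnd g x y] by rewrite inE.
have := cardsD1 f [set g | fedge bnd g x y]; rewrite fin E => /eqP; rewrite eqSS => /eqP /esym C.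
have /card_gt0P [g] : (0 < #|[set g | fedge bnd g x y] :\ f|)%N by rewrite C.
by rewrite !inE => /andP[gf hg]; exists g.
Qed.

Lemma edge_faces3 f g h x y : fedge bnd f x y -> fedge bnd g x y -> fedge bnd h x y ->
  f != g -> h != f -> h != g -> False.
Proof.
move=> hf hg hh fg hf' hg'.
have E := edge2 (fedge_edge hf).
have u : uniq [:: f; g; h] by rewrite /= !inE !negb_or fg (eq_sym f h) hf' (eq_sym g h) hg'.
have := uniq_card_le (N := [set g | fedge bnd g x y]) u.
by rewrite /= !inE hf hg hh E /= => /(_ isT).
Qed.

Definition Fv v := [set g | v \in bnd g].

Lemma sum_bool_card (T : finType) (P : pred T) : (\sum_(t : T) (P t : nat) = #|[set t | P t]|)%N.
Proof.
rewrite -sum1dep_card [RHS]big_mkcond /=; apply: eq_bigr => t _; by case: (P t).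
Qed.

Lemma FvE v : #|Fv v| = vdeg bnd v.
Proof.
have L : forall g, (\sum_(w : V) (fedge bnd g v w : nat) = (v \in bnd g) * 2)%N.
  move=> g; rewrite sum_bool_card.
  case vg: (v \in bnd g); last first.
    rewrite (_ : [set w | fedge bnd g v w] = set0) ?cards0 //.
    by apply/setP => w; rewrite !inE /fedge vg.
  rewrite (_ : [set w | fedge bnd g v w] = [set next (bnd g) v; prev (bnd g) v]).
    have [_ _ np] := next_neq (uniq_bnd g) vg (size_bnd g).
    by rewrite cards2 np.
  by apply/setP => w; rewrite !inE fedgeE.
have R : forall w, (\sum_(g : F) (fedge bnd g v w : nat) = (is_edge bnd v w) * 2)%N.
  move=> w; rewrite sum_bool_card.
  case e: (is_edge bnd v w); first by rewrite edge2.
  rewrite (_ : [set g | fedge bnd g v w] = set0) ?cards0 //.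
  apply/setP => g; rewrite !inE; apply/negP => H.
  by move: e; rewrite /is_edge; case/existsP; exists g.
have : (\sum_(g : F) \sum_(w : V) (fedge bnd g v w : nat) =
        \sum_(w : V) \sum_(g : F) (fedge bnd g v w : nat))%N by apply: exchange_big.
rewrite (eq_bigr _ (fun g _ => L g)) (eq_bigr _ (fun w _ => R w)).
rewrite -!big_distrl /= !sum_bool_card /vdeg /Fv => /eqP.
by rewrite eqn_pmul2r // => /eqP.
Qed.

Lemma in_card_le (T : finType) (s : seq T) (N : {set T}) :
  uniq s -> all (fun z => z \in N) s -> (#|N| < size s)%N -> False.
Proof. by move=> u a /leq_trans H; have := H _ (uniq_card_le u a); rewrite ltnn. Qed.

End Comb.

Section Comb2.
Variables (V F : finType) (bnd : F -> seq V).
Hypothesis Hc : comb_surface bnd.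
Local Notation fedge := (fedge bnd).
Local Notation Fv := (Fv bnd).

Lemma nbr_set_card v : #|[set w | is_edge bnd v w]| = #|Fv v|.
Proof. by rewrite (FvE Hc). Qed.

Lemma in_nbr g v w : fedge g v w -> w \in [set w | is_edge bnd v w].
Proof. by move=> H; rewrite inE; apply: fedge_edge H. Qed.

Lemma in_Fv g v w : fedge g v w -> g \in Fv v.
Proof. by move=> H; rewrite inE; case: (fedge_in H). Qed.

Lemma three_faces f v ga gb : v \in bnd f -> #|Fv v| = 3 ->
  ga != f -> fedge ga v (next (bnd f) v) -> gb != f -> fedge gb v (prev (bnd f) v) ->
  [/\ ga != gb, (forall g, v \in bnd g -> [|| g == f, g == ga | g == gb]) &
   exists w, [/\ fedge ga v w, fedge gb v w, w != next (bnd f) v & w != prev (bnd f) v]].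
Proof.
move=> vf F3 gaf ha gbf hb.
set n := next (bnd f) v in ha *; set p := prev (bnd f) v in hb *.
have [nv pv np] := next_neq (uniq_bnd Hc f) vf (size_bnd Hc f).
have nf : n \in bnd f by rewrite mem_next.
have pf : p \in bnd f by rewrite mem_prev.
have [_ nga] := fedge_in ha; have [vga _] := fedge_in ha.
have [_ pgb] := fedge_in hb; have [vgb _] := fedge_in hb.
have u3 : uniq [:: v; n; p] by rewrite /= !inE !negb_or eq_sym nv eq_sym pv np.
have pga : p \notin bnd ga.
  by apply/negP => pga; apply: (share3 Hc (f := f) (g := ga) _ vf nf pf vga nga pga u3); rewrite eq_sym.
have ngb : n \notin bnd gb.
  by apply/negP => ngb; apply: (share3 Hc (f := f) (g := gb) _ vf nf pf vgb ngb pgb u3); rewrite eq_sym.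
have gab : ga != gb by apply/eqP => E; move: pga; rewrite E pgb.
split => //.
  move=> g vg; apply/negPn/negP; rewrite !negb_or => /and3P[g1 g2 g3].
  apply: (in_card_le (N := Fv v) (s := [:: g; f; ga; gb])).
  - by rewrite /= !inE !negb_or g1 g2 g3 (eq_sym f) gaf (eq_sym f) gbf gab.
  - by rewrite /= !inE vg vf vga vgb.
  by rewrite F3.
have [wa [hwa wan]] := other_nbr Hc ha.
have [wb [hwb wbp]] := other_nbr Hc hb.
have wap : wa != p by apply/eqP => E; move: pga; rewrite -E; case: (fedge_in hwa) => _ ->.
have wbn : wb != n by apply/eqP => E; move: ngb; rewrite -E; case: (fedge_in hwb) => _ ->.
have [E|NE] := eqVneq wa wb.
  by exists wa; split => //; rewrite E.
exfalso; apply: (in_card_le (N := [set w | is_edge bnd v w]) (s := [:: n; p; wa; wb])).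
- by rewrite /= !inE !negb_or np (eq_sym n) wan (eq_sym n) wbn (eq_sym p) wap (eq_sym p) wbp NE.
- by rewrite /= (in_nbr ha) (in_nbr hb) (in_nbr hwa) (in_nbr hwb).
by rewrite nbr_set_card F3.
Qed.

Lemma Fv_ge3 f v : v \in bnd f -> (3 <= #|Fv v|)%N.
Proof.
move=> vf.
have [ga [gaf ha]] := other_face Hc (fedge_next Hc vf).
have [gb [gbf hb]] := other_face Hc (fedge_prev Hc vf).
set n := next (bnd f) v in ha *; set p := prev (bnd f) v in hb *.
have [nv pv np] := next_neq (uniq_bnd Hc f) vf (size_bnd Hc f).
have nf : n \in bnd f by rewrite mem_next.
have pf : p \in bnd f by rewrite mem_prev.
have [vga nga] := fedge_in ha.
have [vgb pgb] := fedge_in hb.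
have u3 : uniq [:: v; n; p] by rewrite /= !inE !negb_or eq_sym nv eq_sym pv np.
have gab : ga != gb.
  apply/eqP => E; rewrite -E in pgb.
  by apply: (share3 Hc (f := f) (g := ga) _ vf nf pf vga nga pgb u3); rewrite eq_sym.
apply: (uniq_card_le (s := [:: f; ga; gb])).
- by rewrite /= !inE !negb_or (eq_sym f) gaf (eq_sym f) gbf gab.
by rewrite /= !inE vf vga vgb.
Qed.

Lemma four_faces f v0 g0 g6 a b : v0 \in bnd f -> #|Fv v0| = 4 ->
  g0 != f -> fedge g0 v0 (next (bnd f) v0) -> g6 != f -> fedge g6 v0 (prev (bnd f) v0) ->
  fedge g0 v0 a -> a != next (bnd f) v0 -> fedge g6 v0 b -> b != prev (bnd f) v0 ->
  exists gx, [/\ fedge gx v0 a, fedge gx v0 b & a != b].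
Proof.
move=> vf F4 g0f h0 g6f h6 ha an hb bp.
set n := next (bnd f) v0 in h0 an *; set p := prev (bnd f) v0 in h6 bp *.
have [nv pv np] := next_neq (uniq_bnd Hc f) vf (size_bnd Hc f).
have nf : n \in bnd f by rewrite mem_next.
have pf : p \in bnd f by rewrite mem_prev.
have [vg0 ng0] := fedge_in h0.
have [vg6 pg6] := fedge_in h6.
have u3 : uniq [:: v0; n; p] by rewrite /= !inE !negb_or eq_sym nv eq_sym pv np.
have pg0 : p \notin bnd g0.
  by apply/negP => pg0; apply: (share3 Hc (f := f) (g := g0) _ vf nf pf vg0 ng0 pg0 u3); rewrite eq_sym.
have ng6 : n \notin bnd g6.
  by apply/negP => ng6; apply: (share3 Hc (f := f) (g := g6) _ vf nf pf vg6 ng6 pg6 u3); rewrite eq_sym.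
have g06 : g0 != g6 by apply/eqP => E; move: pg0; rewrite E pg6.
have ap : a != p by apply/eqP => E; move: pg0; rewrite -E; case: (fedge_in ha) => _ ->.
have bn : b != n by apply/eqP => E; move: ng6; rewrite -E; case: (fedge_in hb) => _ ->.
have [gx gxF] : exists gx, [&& gx \in Fv v0, gx != f, gx != g0 & gx != g6].
  case: (boolP [exists gx, [&& gx \in Fv v0, gx != f, gx != g0 & gx != g6]]) => [/existsP //|].
  rewrite negb_exists => /forallP H; exfalso.
  apply: (in_card_le (N := [set f; g0; g6]) (s := enum (Fv v0))).
  - exact: enum_uniq.
  - apply/allP => g; rewrite mem_enum => gF; have := H g; rewrite gF /= !inE.
    by rewrite -!negb_or negbK orbA.
  rewrite -cardE F4; apply: (@leq_ltn_trans 3) => //.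
  have : (#|[set f; g0; g6]| <= #|[:: f; g0; g6]|)%N.
    by apply/subset_leq_card/subsetP => z; rewrite !inE -orbA.
  move/leq_trans; apply; exact: card_size.
case/and4P: gxF => gxv gxf gx0 gx6.
have vgx : v0 \in bnd gx by rewrite inE in gxv.
set x := next (bnd gx) v0; set y := prev (bnd gx) v0.
have hx : fedge gx v0 x by apply: fedge_next.
have hy : fedge gx v0 y by apply: fedge_prev.
have [_ _ xy] := next_neq (uniq_bnd Hc gx) vgx (size_bnd Hc gx).
have notnp : forall z, fedge gx v0 z -> (z != n) && (z != p).
  move=> z hz; apply/andP; split; apply/eqP => E; subst z.
    by apply: (edge_faces3 Hc (fedge_next Hc vf) h0 hz); rewrite // eq_sym.
  by apply: (edge_faces3 Hc (fedge_prev Hc vf) h6 hz); rewrite // eq_sym.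
have /andP[xn xp] := notnp _ hx.
have /andP[yn yp] := notnp _ hy.
have NS : #|[set w | is_edge bnd v0 w]| = 4 by rewrite nbr_set_card F4.
have [E|NE] := eqVneq a b.
  subst b.
  have xa : x != a.
    by apply/eqP => E; rewrite E in hx; apply: (edge_faces3 Hc ha hb hx).
  have ya : y != a.
    by apply/eqP => E; rewrite E in hy; apply: (edge_faces3 Hc ha hb hy).
  exfalso; apply: (in_card_le (N := [set w | is_edge bnd v0 w]) (s := [:: n; p; a; x; y])).
  - rewrite /= !inE !negb_or np (eq_sym n) an (eq_sym n) xn (eq_sym n) yn.
    by rewrite (eq_sym p) ap (eq_sym p) xp (eq_sym p) yp (eq_sym a) xa (eq_sym a) ya xy.
  - by rewrite /= (in_nbr (fedge_next Hc vf)) (in_nbr (fedge_prev Hc vf)) (in_nbr ha) (in_nbr hx) (in_nbr hy).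
  by rewrite NS.
have inab : forall z, fedge gx v0 z -> (z == a) || (z == b).
  move=> z hz; apply/negPn/negP; rewrite negb_or => /andP[za zb].
  have /andP[zn zp] := notnp _ hz.
  apply: (in_card_le (N := [set w | is_edge bnd v0 w]) (s := [:: n; p; a; b; z])).
  - rewrite /= !inE !negb_or np (eq_sym n) an (eq_sym n) bn (eq_sym n) zn.
    by rewrite (eq_sym p) ap (eq_sym p) bp (eq_sym p) zp NE (eq_sym a) za (eq_sym b) zb.
  - by rewrite /= (in_nbr (fedge_next Hc vf)) (in_nbr (fedge_prev Hc vf)) (in_nbr ha) (in_nbr hb) (in_nbr hz).
  by rewrite NS.
have xy' : x != y by [].
case/orP: (inab _ hx) => /eqP Ex; case/orP: (inab _ hy) => /eqP Ey;
  rewrite ?Ex ?Ey in hx hy xy'.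
- by rewrite eqxx in xy'.
- by exists gx.
- by exists gx.
- by rewrite eqxx in xy'.
Qed.

End Comb2.

Local Open Scope ring_scope.


Section DotLemmas.
Variable R : realType.
Local Notation pt := 'rV[R]_3.
Implicit Types u v w : pt.

Lemma dotC u w : dot u w = dot w u.
Proof. by rewrite /dot; apply: eq_bigr => i _; rewrite mulrC. Qed.
Lemma dotDl u v w : dot (u + v) w = dot u w + dot v w.
Proof. by rewrite /dot -big_split; apply: eq_bigr => i _; rewrite mxE mulrDl. Qed.
Lemma dotZl (a : R) u w : dot (a *: u) w = a * dot u w.
Proof. by rewrite /dot mulr_sumr; apply: eq_bigr => i _; rewrite mxE mulrA. Qed.
Lemma dotNl u w : dot (- u) w = - dot u w.
Proof. by rewrite -scaleN1r dotZl mulN1r. Qed.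
Lemma dotBl u v w : dot (u - v) w = dot u w - dot v w.
Proof. by rewrite dotDl dotNl. Qed.
Lemma dotDr u v w : dot w (u + v) = dot w u + dot w v.
Proof. by rewrite dotC dotDl !(dotC w). Qed.
Lemma dotZr (a : R) u w : dot w (a *: u) = a * dot w u.
Proof. by rewrite dotC dotZl dotC. Qed.
Lemma dotNr u w : dot w (- u) = - dot w u.
Proof. by rewrite dotC dotNl dotC. Qed.
Lemma dotBr u v w : dot w (u - v) = dot w u - dot w v.
Proof. by rewrite dotDr dotNr. Qed.
Lemma dot_ge0 u : 0 <= dot u u.
Proof. by rewrite /dot; apply: sumr_ge0 => i _; rewrite -expr2 sqr_ge0. Qed.

End DotLemmas.

Definition dotE := (dotDl, dotBl, dotZl, dotNl, dotDr, dotBr, dotZr, dotNr).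

Section Poly.
Variable R : realType.
Local Notation pt := 'rV[R]_3.

Definition hc (k : nat) : R := cos (2 * pi / k%:R).

Definition Qp (rho : R) (e1 e2 : pt) (t : R) : pt := rho *: (cos t *: e1 + sin t *: e2).

Lemma dotQ rho e1 e2 t1 t2 : dot e1 e1 = 1 -> dot e2 e2 = 1 -> dot e1 e2 = 0 ->
  dot (Qp rho e1 e2 t1) (Qp rho e1 e2 t2) = rho ^+ 2 * cos (t1 - t2).
Proof.
move=> h1 h2 h3; rewrite /Qp !dotE h1 h2 h3 (dotC e2 e1) h3 cosB; ring.
Qed.

Lemma sumQ rho e1 e2 t p :
  Qp rho e1 e2 (t + p) + Qp rho e1 e2 (t - p) = (2 * cos p) *: Qp rho e1 e2 t.
Proof.
rewrite /Qp; apply/rowP => i; rewrite !mxE cosD cosB sinD sinB; ring.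
Qed.

End Poly.

Section PolyFacts.
Variable R : realType.
Local Notation pt := 'rV[R]_3.

Lemma rho_hc (k : nat) : (3 <= k)%N ->
  ((2 * sin (pi / k%:R))^-1) ^+ 2 * (2 - 2 * hc R k) = 1.
Proof.
move=> k3.
have kp : (0 : R) < k%:R by rewrite ltr0n; lia.
have s0 : 0 < sin (pi / k%:R :> R).
  apply: sin_gt0_pi; apply/andP; split; first by rewrite divr_gt0 // pi_gt0.
  by rewrite ltr_pdivrMr // ltr_pMr ?pi_gt0 // ltr1n; lia.
rewrite /hc (_ : 2 * pi / k%:R = (pi / k%:R) *+ 2); last by rewrite mulr2n; field; lra.
rewrite cos_mulr2n cos2sin2 mulr2n.
field; lra.
Qed.

Lemma poly_facts (s : seq pt) : regular_unit_polygon s -> (3 <= size s)%N ->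
  exists C : pt, forall j, (j < size s)%N ->
    [/\ dot (nth 0 s (sidx (size s) j) - nth 0 s j) (nth 0 s (sidx (size s) j) - nth 0 s j) = 1,
        dot (nth 0 s (pidx (size s) j) - nth 0 s j) (nth 0 s (sidx (size s) j) - nth 0 s j)
          = - hc R (size s) &
        nth 0 s (pidx (size s) j) + nth 0 s (sidx (size s) j) - (2 * hc R (size s)) *: nth 0 s j
          = (2 - 2 * hc R (size s)) *: C].
Proof.
case=> C [e1 [e2 [t0 [h1 h2 h3 Hp]]]] k3; exists C => j jk.
move: Hp k3 jk; set k := size s => Hp k3 jk.
pose rho : R := (2 * sin (pi / k%:R))^-1.
pose phi : R := 2 * pi / k%:R.
have kp : (0 : R) < k%:R by rewrite ltr0n; lia.
have Pj : forall i, (i < k)%N -> nth 0 s i = C + Qp rho e1 e2 (t0 + 2 * pi * i%:R / k%:R).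
  by move=> i ik; rewrite Hp.
pose th : R := t0 + 2 * pi * j%:R / k%:R.
have QE : forall t t', cos t = cos t' -> sin t = sin t' -> Qp rho e1 e2 t = Qp rho e1 e2 t'.
  by move=> t t' ct st; rewrite /Qp ct st.
have Hs : nth 0 s (sidx k j) = C + Qp rho e1 e2 (th + phi).
  rewrite Pj ?sidx_lt //; congr (_ + _); rewrite /sidx.
  case: eqP => [E|NE].
    have -> : th + phi = t0 + 2 * pi * 0%:R / k%:R + pi *+ 2.
      have kE : (k%:R : R) = j%:R + 1 by rewrite -E -addn1 natrD.
      have j0 : (0:R) <= j%:R by rewrite ler0n.
      rewrite /th /phi kE mulr2n; field; lra.
    by apply: QE; [rewrite cosD2pi | rewrite sinD2pi].
  by congr Qp; rewrite /th /phi -addn1 natrD; field; lra.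
have Hpp : nth 0 s (pidx k j) = C + Qp rho e1 e2 (th - phi).
  rewrite Pj ?pidx_lt //; congr (_ + _); rewrite /pidx.
  case: eqP => [E|NE].
    have -> : t0 + 2 * pi * (k.-1)%:R / k%:R = th - phi + pi *+ 2.
      rewrite /th /phi E -subn1 natrB; last lia.
      rewrite mulr2n; field; lra.
    by apply: QE; [rewrite cosD2pi | rewrite sinD2pi].
  congr Qp; rewrite /th /phi -subn1 natrB; last lia.
  field; lra.
have Hb : nth 0 s j = C + Qp rho e1 e2 th by rewrite Pj.
have hr : rho ^+ 2 * (2 - 2 * cos phi) = 1 by apply: rho_hc.
rewrite /hc -/phi Hs Hpp Hb.
have D : forall t1 t2, dot (Qp rho e1 e2 t1) (Qp rho e1 e2 t2) = rho ^+ 2 * cos (t1 - t2).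
  by move=> t1 t2; apply: dotQ.
have Cab : forall a b : pt, C + a - (C + b) = a - b.
  by move=> a b; apply/rowP => i; rewrite !mxE; ring.
split.
- rewrite !Cab !dotBl !dotBr !D !subrr.
  rewrite (_ : th + phi - th = phi); last by ring.
  rewrite (_ : th - (th + phi) = - phi); last by ring.
  rewrite cosN cos0.
  by transitivity (rho ^+ 2 * (2 - 2 * cos phi)); [ring | exact hr].
- rewrite !Cab !dotBl !dotBr !D !subrr.
  rewrite (_ : th - phi - (th + phi) = - (phi *+ 2)); last by rewrite mulr2n; ring.
  rewrite (_ : th - phi - th = - phi); last by ring.
  rewrite (_ : th - (th + phi) = - phi); last by ring.
  rewrite !cosN cos0 cos_mulr2n.
  transitivity (- cos phi * (rho ^+ 2 * (2 - 2 * cos phi))); last by rewrite hr mulr1.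
  by rewrite mulr2n; ring.
- have S := sumQ rho e1 e2 th phi.
  apply/rowP => i; move/rowP: S => /(_ i); rewrite !mxE => S.
  lra.
Qed.

End PolyFacts.

Section RPSGeo.
Variable R : realType.
Variables (V F : finType) (bnd : F -> seq V) (psi : V -> 'rV[R]_3).
Hypothesis H : is_RPS bnd psi.
Local Notation pt := 'rV[R]_3.
Local Notation fedge := (fedge bnd).

Lemma Hc : comb_surface bnd. Proof. by case: H. Qed.
Lemma Hpoly g : regular_unit_polygon (map psi (bnd g)). Proof. by case: H => _ P _; apply: P. Qed.

Lemma face_facts g : exists C : pt, forall v, v \in bnd g ->
  [/\ dot (psi (next (bnd g) v) - psi v) (psi (next (bnd g) v) - psi v) = 1,
      dot (psi (prev (bnd g) v) - psi v) (psi (next (bnd g) v) - psi v) = - hc R (fdeg bnd g) &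
      psi (prev (bnd g) v) + psi (next (bnd g) v) - (2 * hc R (fdeg bnd g)) *: psi v
        = (2 - 2 * hc R (fdeg bnd g)) *: C].
Proof.
have k3 : (3 <= size (map psi (bnd g)))%N by rewrite size_map (size_bnd Hc).
have [C HC] := poly_facts (Hpoly g) k3.
exists C => v vg.
have jk : (index v (bnd g) < size (map psi (bnd g)))%N by rewrite size_map index_mem.
have [A1 A2 A3] := HC _ jk.
have NM : forall i, (i < size (bnd g))%N -> nth 0 (map psi (bnd g)) i = psi (nth v (bnd g) i).
  by move=> i ik; rewrite (set_nth_default (psi v)) ?size_map // (nth_map v).
rewrite size_map in A1 A2 A3 jk.
rewrite !NM ?sidx_lt ?pidx_lt // ?nth_index // in A1 A2 A3.
rewrite -(next_sidx vg) -(prev_pidx (uniq_bnd Hc g) vg) in A1 A2 A3.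
by rewrite /fdeg; split.
Qed.

Lemma dot_sqB (a b : pt) : dot (a - b) (a - b) = dot (b - a) (b - a).
Proof. by rewrite -opprB dotNl dotNr opprK. Qed.

Lemma GL1 g x y : fedge g x y -> dot (psi y - psi x) (psi y - psi x) = 1.
Proof.
move=> h; have [xg yg] := fedge_in h.
have [C HC] := face_facts g.
move: h; rewrite (fedgeE Hc) // => /orP[/eqP ->|/eqP E]; first by case: (HC x xg).
have -> : x = next (bnd g) y by rewrite E next_prev // (uniq_bnd Hc).
by rewrite dot_sqB; case: (HC y yg).
Qed.

Lemma GL2 g v x y : fedge g v x -> fedge g v y -> x != y ->
  dot (psi x - psi v) (psi y - psi v) = - hc R (fdeg bnd g).
Proof.
move=> hx hy xy; have [vg _] := fedge_in hx.
have [C HC] := face_facts g; have [_ A2 _] := HC v vg.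
move: hx hy xy; rewrite !(fedgeE Hc) //.
by case/orP => /eqP ->; case/orP => /eqP ->; rewrite ?eqxx // => _; rewrite // dotC.
Qed.

Lemma tri_eq g : exists C : pt, forall v u x, fedge g v u -> fedge g v x -> u != x ->
  psi u + psi x - (2 * hc R (fdeg bnd g)) *: psi v = (2 - 2 * hc R (fdeg bnd g)) *: C.
Proof.
have [C HC] := face_facts g; exists C => v u x hu hx ux.
have [vg _] := fedge_in hu; have [_ _ A3] := HC v vg.
move: hu hx ux; rewrite !(fedgeE Hc) //.
by case/orP => /eqP ->; case/orP => /eqP ->; rewrite ?eqxx // => _;
  first [exact: A3 | rewrite (addrC (psi (next _ _))); exact: A3].
Qed.

Lemma GL4 g u v x y : fedge g v u -> fedge g v x -> u != x ->
  fedge g x v -> fedge g x y -> v != y ->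
  psi y - psi x = (2 * hc R (fdeg bnd g)) *: (psi x - psi v) - (psi v - psi u).
Proof.
move=> h1 h2 ux h3 h4 vy.
have [C HC] := tri_eq g.
have E1 := HC _ _ _ h1 h2 ux.
have E2 := HC _ _ _ h3 h4 vy.
apply/rowP => i; move/rowP: E1 => /(_ i); move/rowP: E2 => /(_ i); rewrite !mxE.
lra.
Qed.

End RPSGeo.


Section Numerics.
Variable R : realType.

Lemma in0pi (x : R) : 0 <= x <= pi -> x \in `[0, pi].
Proof. by move=> h; rewrite in_itv /=. Qed.

Lemma hc_le1 k : hc R k <= 1.
Proof. exact: cos_le1. Qed.

Lemma twopi_div_in (k : nat) : (2 <= k)%N -> (0 : R) < 2 * pi / k%:R <= (pi : R).
Proof.
move=> k2; have kp : (0 : R) < k%:R by rewrite ltr0n; lia.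
have k2' : (2 : R) <= k%:R by rewrite (ler_nat R 2 k).
have pp := @pi_gt0 R.
apply/andP; split; first by apply: divr_gt0 => //; lra.
by rewrite ler_pdivrMr //; nra.
Qed.

Lemma hc_mono m k : (2 <= m)%N -> (m <= k)%N -> hc R m <= hc R k.
Proof.
move=> m2 mk; have [->|mk'] := eqVneq m k; first by [].
have k2 : (2 <= k)%N by lia.
have /andP[a1 a2] := twopi_div_in m2.
have /andP[b1 b2] := twopi_div_in k2.
rewrite /hc le_eqVlt; apply/orP; right.
rewrite ltr_cos ?in0pi ?(ltW a1) ?(ltW b1) ?a2 ?b2 //.
have mp : (0 : R) < m%:R by rewrite ltr0n; lia.
have kp : (0 : R) < k%:R by rewrite ltr0n; lia.
have mk2 : (m%:R : R) < k%:R by rewrite ltr_nat; lia.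
have pp := @pi_gt0 R.
rewrite ltr_pdivrMr // mulrAC ltr_pdivlMr //.
by rewrite ltr_pM2l //; lra.
Qed.

Lemma cos_lt1 (t : R) : 0 < t <= pi -> cos t < 1.
Proof.
move=> /andP[t0 tp]; rewrite -cos0 ltr_cos ?in0pi ?lexx ?pi_ge0 ?(ltW t0) //.
Qed.

Lemma cos3 (t : R) : cos (t + t *+ 2) = 4 * cos t ^+ 3 - 3 * cos t.
Proof.
rewrite cosD cos_mulr2n sin_mulr2n.
have S := sin2cos2 t.
have -> : sin t * ((cos t * sin t) *+ 2) = 2 * cos t * sin t ^+ 2 by rewrite mulr2n; ring.
by rewrite S mulr2n; ring.
Qed.

Lemma hc5_eq : 4 * hc R 5 ^+ 2 + 2 * hc R 5 - 1 = 0 /\ 3 / 10 <= hc R 5.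
Proof.
rewrite /hc; set t := 2 * pi / 5%:R.
have pp := @pi_gt0 R.
have tpos : 0 < t <= pi by apply: twopi_div_in.
have c1 := cos_lt1 tpos.
have c0 : 0 < cos t.
  apply: cos_gt0_pihalf; rewrite /t; apply/andP; split; lra.
have e : t + t *+ 2 = - (t *+ 2) + pi *+ 2 by rewrite /t !mulr2n; field.
have := congr1 cos e; rewrite cosD2pi cosN cos3 cos_mulr2n mulr2n => E.
have F : (cos t - 1) * (4 * cos t ^+ 2 + 2 * cos t - 1) = 0.
  by lra.
move/eqP: F; rewrite mulf_eq0 => /orP[/eqP|/eqP Q]; first lra.
split => //; nra.
Qed.

Lemma hc7_ge : 62 / 100 <= hc R 7.
Proof.
rewrite /hc; set t := 2 * pi / 7%:R.
have pp := @pi_gt0 R.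
have tpos : 0 < t <= pi by apply: twopi_div_in.
have c1 := cos_lt1 tpos.
have c0 : 0 < cos t.
  apply: cos_gt0_pihalf; rewrite /t; apply/andP; split; lra.
have e : (t *+ 2) *+ 2 = - (t + t *+ 2) + pi *+ 2 by rewrite /t !mulr2n; field.
have := congr1 cos e; rewrite cosD2pi cosN cos3 !cos_mulr2n !mulr2n => E.
have F : (cos t - 1) * (8 * cos t ^+ 3 + 4 * cos t ^+ 2 - 4 * cos t - 1) = 0.
  by lra.
move/eqP: F; rewrite mulf_eq0 => /orP[/eqP|/eqP Q]; first lra.
nra.
Qed.

End Numerics.


Section Main.
Variable R : realType.
Variables (V F : finType) (bnd : F -> seq V) (psi : V -> 'rV[R]_3).
Hypothesis H : is_RPS bnd psi.
Hypothesis Hdeg : forall g : F, fdeg bnd g \in [:: 5; 7; 8; 9; 10]%N.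
Local Notation fedge := (fedge bnd).
Local Notation Fv := (Fv bnd).
Let Hc := Hc H.

Lemma deg5 g : (5 <= fdeg bnd g)%N.
Proof. by move: (Hdeg g); rewrite !inE => /orP[/eqP->|/orP[/eqP->|/orP[/eqP->|/orP[/eqP->|/eqP->]]]]. Qed.
Lemma deg7 g : fdeg bnd g != 5%N -> (7 <= fdeg bnd g)%N.
Proof. by move: (Hdeg g); rewrite !inE => /orP[/eqP->|/orP[/eqP->|/orP[/eqP->|/orP[/eqP->|/eqP->]]]]. Qed.

Lemma hq g : 3 / 10 <= hc R (fdeg bnd g).
Proof. have [_ h] := hc5_eq R; apply: le_trans h _; apply: hc_mono => //; exact: deg5. Qed.
Lemma hq7 g : (7 <= fdeg bnd g)%N -> 62 / 100 <= hc R (fdeg bnd g).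
Proof. move=> h7; apply: le_trans (hc7_ge R) _; exact: hc_mono. Qed.
Lemma hle1 g : hc R (fdeg bnd g) <= 1.
Proof. exact: hc_le1. Qed.

Definition good (f : F) (u : V) :=
  #|Fv u| = 3%N /\ forall g, u \in bnd g -> g != f -> fdeg bnd g = 5%N.

Lemma G1 f v : v \in bnd f -> (7 <= fdeg bnd f)%N -> #|Fv v| = 3%N -> good f v.
Proof.
move=> vf f7 F3; split => //.
have [ga [gaf ha]] := other_face Hc (fedge_next Hc vf).
have [gb [gbf hb]] := other_face Hc (fedge_prev Hc vf).
have [gab Hall [w [hwa hwb wn wp]]] := three_faces Hc vf F3 gaf ha gbf hb.
set n := next (bnd f) v in ha hwa wn *; set p := prev (bnd f) v in hb hwb wp *.
have [nv pv np] := next_neq (uniq_bnd Hc f) vf (size_bnd Hc f).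
have AA := GL1 H (fedge_next Hc vf).
have BB := GL1 H (fedge_prev Hc vf).
have WW := GL1 H hwa.
have AB := GL2 H (fedge_next Hc vf) (fedge_prev Hc vf) np.
have nw : n != w by rewrite eq_sym.
have AW := GL2 H ha hwa nw.
have pw : p != w by rewrite eq_sym.
have BW := GL2 H hb hwb pw.
rewrite -/n -/p in AA BB AB.
set A := psi n - psi v in AA AB AW; set B := psi p - psi v in BB AB BW.
set W := psi w - psi v in WW AW BW.
have S := dot_ge0 (A + B + (93/100) *: W).
clearbody A B W.
rewrite !dotE AA BB WW AB AW BW (dotC B A) AB (dotC W A) AW (dotC W B) BW in S.
have hf := hq7 f7; have ha5 := hq ga; have hb5 := hq gb.
have h1 := hle1 f; have h2 := hle1 ga; have h3 := hle1 gb.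
have ga5 : fdeg bnd ga = 5%N.
  case: (eqVneq (fdeg bnd ga) 5%N) => // /deg7 /hq7 ha7; exfalso; clear -S hf ha7 hb5 h1 h2 h3; nra.
have gb5 : fdeg bnd gb = 5%N.
  case: (eqVneq (fdeg bnd gb) 5%N) => // /deg7 /hq7 hb7; exfalso; clear -S hf hb7 ha5 h1 h2 h3; nra.
move=> g vg gf; have := Hall g vg; rewrite (negbTE gf) /=.
by case/orP => /eqP ->.
Qed.

Lemma G2 f v0 : v0 \in bnd f -> fdeg bnd f = 7%N -> #|Fv v0| = 4%N ->
  good f (next (bnd f) v0) -> good f (prev (bnd f) v0) -> False.
Proof.
move=> v0f f7 F4 [F31 G1'] [F36 G6'].
have uf := uniq_bnd Hc f.
set v1 := next (bnd f) v0 in F31 G1' *; set v6 := prev (bnd f) v0 in F36 G6' *.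
have v1f : v1 \in bnd f by rewrite mem_next.
have v6f : v6 \in bnd f by rewrite mem_prev.
set v2 := next (bnd f) v1; set v5 := prev (bnd f) v6.
have pv1 : prev (bnd f) v1 = v0 by rewrite prev_next.
have nv6 : next (bnd f) v6 = v0 by rewrite next_prev.
have [_ _ n0p0] := next_neq uf v0f (size_bnd Hc f).
have [_ _ n1p1] := next_neq uf v1f (size_bnd Hc f).
have [_ _ n6p6] := next_neq uf v6f (size_bnd Hc f).
rewrite -/v1 -/v6 in n0p0; rewrite -/v2 pv1 in n1p1; rewrite -/v5 nv6 in n6p6.
have e01 : fedge f v0 v1 := fedge_next Hc v0f.
have e06 : fedge f v0 v6 := fedge_prev Hc v0f.
have e12 : fedge f v1 v2 := fedge_next Hc v1f.
have e65 : fedge f v6 v5 := fedge_prev Hc v6f.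
have e10 : fedge f v1 v0 by rewrite fedge_sym.
have e60 : fedge f v6 v0 by rewrite fedge_sym.
have [g0 [g0f h0]] := other_face Hc e01.
have [g6 [g6f h6]] := other_face Hc e06.
have [g1 [g1f h1]] := other_face Hc e12.
have [g5 [g5f h5]] := other_face Hc e65.
have h0' : fedge g0 v1 (prev (bnd f) v1) by rewrite pv1 fedge_sym.
have h6' : fedge g6 v6 (next (bnd f) v6) by rewrite nv6 fedge_sym.
have [_ _ [w [hw1 hw0 wv2 wv0]]] := three_faces Hc v1f F31 g1f h1 g0f h0'.
have [_ _ [w' [hw6 hw5 w'v0 w'v5]]] := three_faces Hc v6f F36 g6f h6' g5f h5.
rewrite -/v2 in wv2; rewrite pv1 in wv0; rewrite nv6 in w'v0; rewrite -/v5 in w'v5.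
have d0 : fdeg bnd g0 = 5%N by apply: G1' => //; case: (fedge_in h0).
have d1 : fdeg bnd g1 = 5%N by apply: G1' => //; case: (fedge_in h1).
have d6 : fdeg bnd g6 = 5%N by apply: G6' => //; case: (fedge_in h6).
have d5 : fdeg bnd g5 = 5%N by apply: G6' => //; case: (fedge_in h5).
have [a [ha av1]] := other_nbr Hc h0.
have [b [hb bv6]] := other_nbr Hc h6.
have [gx [hxa hxb ab]] := four_faces Hc v0f F4 g0f h0 g6f h6 ha av1 hb bv6.
have EE := GL1 H e01.
have DD := GL1 H e06.
have ED := GL2 H e01 e06 n0p0.
have h10 : fedge g0 v1 v0 by rewrite fedge_sym.
have h60 : fedge g6 v6 v0 by rewrite fedge_sym.
have WW := GL1 H hw0.
have W'W' := GL1 H hw6.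
have v0w : v0 != w by rewrite eq_sym.
have v2w : v2 != w by rewrite eq_sym.
have v0w' : v0 != w' by rewrite eq_sym.
have v5w' : v5 != w' by rewrite eq_sym.
have EW := GL2 H h10 hw0 v0w.
have BW := GL2 H h1 hw1 v2w.
have DW' := GL2 H h60 hw6 v0w'.
have CW' := GL2 H h5 hw5 v5w'.
have v0v2 : v0 != v2 by rewrite eq_sym.
have v0v5 : v0 != v5 by [].
have v6v1 : v6 != v1 by rewrite eq_sym.
have V2 := GL4 H e06 e01 v6v1 e10 e12 v0v2.
have V5 := GL4 H e01 e06 n0p0 e60 e65 v0v5.
have wv0' : w != v0 by [].
have v1a : v1 != a by rewrite eq_sym.
have v6b : v6 != b by rewrite eq_sym.
have h0a := GL4 H hw0 h10 wv0 h0 ha v1a.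
have h6b := GL4 H hw6 h60 w'v0 h6 hb v6b.
have XA := GL2 H hxa hxb ab.
have hx := hq gx.
rewrite d0 in EW h0a; rewrite d1 in BW; rewrite d6 in DW' h6b; rewrite d5 in CW'.
rewrite f7 in ED V2 V5.
have hh := hc7_ge R.
have [_ hq5] := hc5_eq R.
have hle := hc_le1 R 7; have qle := hc_le1 R 5.
rewrite h0a h6b in XA.
rewrite V2 in BW; rewrite V5 in CW'.
move: EE DD ED WW W'W' EW BW DW' CW' XA.
rewrite -[psi v0 - psi v1]opprB -[psi v0 - psi v6]opprB -[psi v1 - psi w]opprB -[psi v6 - psi w']opprB.
set E := psi v1 - psi v0; set D := psi v6 - psi v0; set W := psi w - psi v1; set W' := psi w' - psi v6.
clearbody E D W W'.
set q := hc R 5; set h := hc R 7; set hX := hc R (fdeg bnd gx).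
move=> EE DD ED WW W'W' EW BW DW' CW' XA.
have {hh}hh : 62/100 <= h by exact: hh.
have {hq5}hq5 : 3/10 <= q by exact: hq5.
have {hle}hle : h <= 1 by exact: hle.
have {qle}qle : q <= 1 by exact: qle.
have {hx}hx : 3/10 <= hX by exact: hx.
have S := dot_ge0 (W + W' + E + D).
rewrite !dotE in S EW BW DW' CW' XA.
rewrite (dotC D E) (dotC W E) (dotC W' E) (dotC W' D) (dotC W D) (dotC W' W) in S.
rewrite (dotC W D) in XA.

rewrite !EE !DD !ED !WW !W'W' in S EW BW DW' CW' XA.
have eEW : dot E W = q by lra.
rewrite eEW in BW S; have eDW : dot D W = - q - 2 * h * q by lra.
have eDW' : dot D W' = q by lra.
rewrite eDW' in CW' S; have eEW' : dot E W' = - q - 2 * h * q by lra.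
rewrite eDW eEW' in S XA.
have hqh : 3 / 10 * h <= q * h by apply: ler_wpM2r; lra.
have qq : 9 / 100 <= q * q by nra.
have qqh : 9 / 100 * h <= q * q * h by apply: ler_wpM2r; lra.
clear -S XA hh hq5 hle qle hx hqh qq qqh.
lra.
Qed.

End Main.


Section Curv.
Variable R : realType.
Variables (V F : finType) (bnd : F -> seq V) (psi : V -> 'rV[R]_3).
Hypothesis H : is_RPS bnd psi.
Hypothesis Hdeg : forall g : F, fdeg bnd g \in [:: 5; 7; 8; 9; 10]%N.
Local Notation Fv := (Fv bnd).
Let Hc := Hc H.

Lemma ia5 g : 3 / 5 * pi <= int_angle R (fdeg bnd g).
Proof.
have k5 : (5 <= fdeg bnd g)%N := deg5 Hdeg g.
rewrite /int_angle; set K : R := (fdeg bnd g)%:R.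
have K5 : 5 <= K by rewrite /K (ler_nat R 5).
have pp := @pi_gt0 R.
rewrite ler_pdivlMr; last lra.
nra.
Qed.

Lemma sum_split v f : v \in bnd f ->
  \sum_(g : F | v \in bnd g) int_angle R (fdeg bnd g) =
  int_angle R (fdeg bnd f) + \sum_(g in [set g | (v \in bnd g) && (g != f)]) int_angle R (fdeg bnd g).
Proof.
move=> vf; rewrite (bigD1 f) //=; congr (_ + _).
by apply: eq_bigl => g; rewrite inE.
Qed.

Lemma card_others v f : v \in bnd f ->
  #|[set g | (v \in bnd g) && (g != f)]| = (#|Fv v|).-1.
Proof.
move=> vf; rewrite (cardsD1 f (Fv v)) inE vf /=.
by apply: eq_card => g; rewrite !inE andbC.
Qed.

Lemma vc_le v f : v \in bnd f ->
  vertex_curv R bnd v + ((#|Fv v|).-1)%:R * (3 / 5 * pi) <= 2 * pi - int_angle R (fdeg bnd f).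
Proof.
move=> vf; rewrite /vertex_curv (sum_split vf).
have : ((#|Fv v|).-1)%:R * (3 / 5 * pi) <=
    \sum_(g in [set g | (v \in bnd g) && (g != f)]) int_angle R (fdeg bnd g).
  rewrite -(card_others vf) mulr_natl -sumr_const.
  by apply: ler_sum => g _; apply: ia5.
lra.
Qed.

Lemma vc_good v f : v \in bnd f -> (7 <= fdeg bnd f)%N -> good bnd f v ->
  vertex_curv R bnd v = 2 * pi - int_angle R (fdeg bnd f) - 2 * int_angle R 5.
Proof.
move=> vf f7 [F3 G5]; rewrite /vertex_curv (sum_split vf).
have -> : \sum_(g in [set g | (v \in bnd g) && (g != f)]) int_angle R (fdeg bnd g) =
          \sum_(g in [set g | (v \in bnd g) && (g != f)]) int_angle R 5.
  by apply: eq_bigr => g; rewrite inE => /andP[vg gf]; rewrite G5.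
rewrite sumr_const (card_others vf) F3 /=.
by rewrite mulr2n; ring.
Qed.

End Curv.


Section SumBounds.
Variable R : realType.
Variables (T : finType) (s : seq T) (t : T -> R) (G : R).
Hypothesis us : uniq s.
Hypothesis tG : forall v, v \in s -> t v <= G.

Lemma card_minus v0 : v0 \in s -> #|[pred v | (v \in s) && (v != v0)]| = (size s).-1.
Proof.
move=> v0s; rewrite -(card_uniqP us) (cardD1 v0 (mem s)) v0s /=.
by apply: eq_card => v; rewrite !inE andbC.
Qed.

Lemma sum_bound1 v0 : v0 \in s -> \sum_(v | v \in s) t v <= t v0 + ((size s).-1)%:R * G.
Proof.
move=> v0s; rewrite (bigD1 v0) //= lerD2l.
rewrite -(card_minus v0s) mulr_natl -sumr_const.
by apply: ler_sum => v /andP[vs _]; apply: tG.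
Qed.

Lemma sum_bound2 v0 v1 : v0 \in s -> v1 \in s -> v1 != v0 ->
  \sum_(v | v \in s) t v <= t v0 + t v1 + ((size s).-2)%:R * G.
Proof.
move=> v0s v1s v10; rewrite (bigD1 v0) //= (bigD1 v1) /=; last by rewrite v1s v10.
rewrite -addrA lerD2l lerD2l.
have C : #|[pred v | ((v \in s) && (v != v0)) && (v != v1)]| = (size s).-2.
  have := card_minus v0s.
  rewrite (cardD1 v1) inE v1s v10 /= => /eqP; rewrite -subn1 => /eqP.
  have sz : (2 <= size s)%N.
    have := card_uniqP us; move=> E; rewrite -E.
    rewrite (cardD1 v0) v0s (cardD1 v1) inE v1s v10 /=; lia.
  move=> E; rewrite (_ : #|_| = (size s - 1).-1); last first.
    by rewrite -E /=; apply: eq_card => v; rewrite !inE; case: (v == v1) => //; rewrite andbC.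
  lia.
rewrite -C mulr_natl -sumr_const.
by apply: ler_sum => v /andP[/andP[vs _] _]; apply: tG.
Qed.

End SumBounds.

Section Final.
Variable R : realType.
Variables (V F : finType) (bnd : F -> seq V) (psi : V -> 'rV[R]_3).
Hypothesis H : is_RPS bnd psi.
Hypothesis Hdeg : forall g : F, fdeg bnd g \in [:: 5; 7; 8; 9; 10]%N.
Local Notation Fv := (Fv bnd).
Let Hc := Hc H.

Definition tv v := vertex_curv R bnd v / (vdeg bnd v)%:R.

Lemma tv_good v f : v \in bnd f -> (7 <= fdeg bnd f)%N -> good bnd f v ->
  tv v = (2 * pi - int_angle R (fdeg bnd f) - 2 * int_angle R 5) / 3.
Proof.
move=> vf f7 gv; rewrite /tv (vc_good R vf f7 gv) -(FvE Hc).
by case: gv => ->.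
Qed.

Lemma tv_bad v f (K : nat) : v \in bnd f -> (1 <= K)%N -> (K <= #|Fv v|)%N ->
  int_angle R (fdeg bnd f) <= pi ->
  tv v <= (2 * pi - int_angle R (fdeg bnd f) - (K%:R - 1) * (3 / 5 * pi)) / K%:R.
Proof.
move=> vf K1 Kd Ipi.
have := vc_le R Hdeg vf; rewrite /tv -(FvE Hc).
set d := #|Fv v| in Kd *.
have d1 : (1 <= d)%N by lia.
rewrite -subn1 natrB // => X.
set D : R := d%:R; set KK : R := K%:R; set I := int_angle R (fdeg bnd f) in X Ipi *.
have KD : KK <= D by rewrite /KK /D ler_nat.
have K1' : 1 <= KK by rewrite /KK (ler_nat R 1).
have pp := @pi_gt0 R.
rewrite ler_pdivrMr; last lra.
rewrite mulrAC ler_pdivlMr; last lra.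
have P : 0 <= (D - KK) * (2 * pi - I + 3 / 5 * pi) by apply: mulr_ge0; lra.
set X' := vertex_curv R bnd v in X *.
have : X' * KK <= (2 * pi - I - (D - 1) * (3 / 5 * pi)) * KK by apply: ler_wpM2r; lra.
nra.
Qed.

Lemma nvals f : (7 <= fdeg bnd f)%N ->
  [\/ fdeg bnd f = 7%N, fdeg bnd f = 8%N, fdeg bnd f = 9%N | fdeg bnd f = 10%N].
Proof.
move=> f7; move: (Hdeg f); rewrite !inE => /orP[/eqP E|/orP[/eqP->|/orP[/eqP->|/orP[/eqP->|/eqP->]]]];
  by [rewrite E in f7 | constructor 1 | constructor 2 | constructor 3 | constructor 4].
Qed.

Lemma I_bounds f : (7 <= fdeg bnd f)%N ->
  5 / 7 * pi <= int_angle R (fdeg bnd f) <= 4 / 5 * pi.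
Proof.
have pp := @pi_gt0 R.
by move/nvals => [] ->; rewrite /int_angle; apply/andP; split; lra.
Qed.

Lemma ia5E : int_angle R 5 = 3 / 5 * pi.
Proof. by rewrite /int_angle; lra. Qed.

Lemma Fv_cases f v : v \in bnd f -> (7 <= fdeg bnd f)%N ->
  good bnd f v \/ (4 <= #|Fv v|)%N.
Proof.
move=> vf f7; have := Fv_ge3 Hc vf.
case: (eqVneq #|Fv v| 3%N) => [F3|F3] _; first by left; apply: (G1 H Hdeg vf f7 F3).
by right; have := Fv_ge3 Hc vf; lia.
Qed.

Lemma Mneg f v0 : (7 <= fdeg bnd f)%N -> v0 \in bnd f -> (4 <= #|Fv v0|)%N ->
  face_curv R bnd f < 0.
Proof.
move=> f7 v0f F4.
have pp := @pi_gt0 R.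
have /andP[Il Iu] := I_bounds f7.
have Ipi : int_angle R (fdeg bnd f) <= pi by lra.
set I := int_angle R (fdeg bnd f) in Il Iu Ipi.
set G := (2 * pi - I - 2 * int_angle R 5) / 3.
have B4 : forall v, v \in bnd f -> (4 <= #|Fv v|)%N ->
    tv v <= (2 * pi - I - (4%:R - 1) * (3 / 5 * pi)) / 4%:R.
  by move=> v vf hv; apply: tv_bad.
have tG : forall v, v \in bnd f -> tv v <= G.
  move=> v vf; case: (Fv_cases vf f7) => [gv|hv].
    by rewrite (tv_good vf f7 gv).
  apply: le_trans (B4 v vf hv) _; rewrite /G ia5E; lra.
have fcE : face_curv R bnd f = \sum_(v | v \in bnd f) tv v by [].
have uf := uniq_bnd Hc f.
have S1 := sum_bound1 uf tG v0f.
rewrite -fcE in S1.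
have T0 := B4 v0 v0f F4.
have sz : size (bnd f) = fdeg bnd f by [].
rewrite sz in S1.
move: S1 T0; rewrite /G ia5E.
case: (nvals f7) => E; rewrite /I E /int_angle /=; try (move=> *; lra).
move=> S1 T0.
case: (eqVneq #|Fv v0| 4%N) => [F4'|F4']; last first.
  have T5 : tv v0 <= (2 * pi - int_angle R (fdeg bnd f) - (5%:R - 1) * (3 / 5 * pi)) / 5%:R.
    by apply: tv_bad => //; lia.
  move: T5; rewrite E /int_angle => T5; lra.
have v1f : next (bnd f) v0 \in bnd f by rewrite mem_next.
have v6f : prev (bnd f) v0 \in bnd f by rewrite mem_prev.
have [n0 p0 _] := next_neq uf v0f (size_bnd Hc f).
have two : forall v1, v1 \in bnd f -> v1 != v0 -> (4 <= #|Fv v1|)%N -> face_curv R bnd f < 0.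
  move=> v1 v1f' v10 hv1.
  have S2 := sum_bound2 uf tG v0f v1f' v10.
  rewrite -fcE sz E /= in S2.
  have T1 := B4 v1 v1f' hv1.
  move: S2 T1; rewrite /G ia5E /I E /int_angle => S2 T1.
  lra.
case: (Fv_cases v1f f7) => [g1|h1]; last exact: (two _ v1f n0 h1).
case: (Fv_cases v6f f7) => [g6|h6]; last exact: (two _ v6f p0 h6).
by case: (G2 H Hdeg v0f E F4' g1 g6).
Qed.

End Final.

Theorem lemma3p1 (R : realType) (V F : finType) (bnd : F -> seq V)
    (psi : V -> 'rV[R]_3) :
  is_RPS bnd psi ->
  (forall g : F, fdeg bnd g \in [:: 5; 7; 8; 9; 10]%N) ->
  forall f : F, (7 <= fdeg bnd f)%N ->
    (0 < face_curv R bnd f ->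
       forall v, v \in bnd f -> form_55n bnd v (fdeg bnd f)) /\
    ((exists v, v \in bnd f /\ vertex_curv R bnd v < 0) ->
       face_curv R bnd f < 0).
Proof.
move=> H Hdeg f f7.
have Hc := Hc H.
have pp := @pi_gt0 R.
split.
- move=> fpos v vf.
  case: (Fv_cases H Hdeg vf f7) => [[F3 G5]|h4]; last first.
    by have := Mneg H Hdeg f7 vf h4; rewrite ltNge (ltW fpos).
  split.
  + by rewrite -(FvE Hc).
  + have C := card_others vf; rewrite F3 /= in C.
    transitivity #|[set g | (v \in bnd g) && (g != f)]|; last exact: C.
    apply: eq_card => g; rewrite !inE.
    case vg: (v \in bnd g) => //=.
    case: (eqVneq g f) => [->|gf].
      by apply/negbTE; apply/eqP => E; rewrite E in f7.
    by rewrite G5 // eqxx.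
  + rewrite (_ : [set g | (v \in bnd g) && (fdeg bnd g == fdeg bnd f)] = [set f]) ?cards1 //.
    apply/setP => g; rewrite !inE.
    case: (eqVneq g f) => [->|gf]; first by rewrite vf eqxx.
    case vg: (v \in bnd g) => //=.
    by rewrite G5 //; apply/negbTE/eqP => E; rewrite -E in f7.
- move=> [v [vf vneg]].
  case: (Fv_cases H Hdeg vf f7) => [gv|h4]; last exact: (Mneg H Hdeg f7 vf h4).
  have := vc_good R vf f7 gv; rewrite ia5E => E.
  have /andP[_ Iu] := I_bounds R Hdeg f7.
  lra.
Qed.
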